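(* Let $H$ be a Hopf algebra and $K$ a locally affine Hopf subalgebra of $H$. If $H$ is generated as an algebra by $K$ and a single element $x\in H$, then $H$ is locally affine.
   Context: A Hopf algebra is locally affine if every finite subset of it is contained in a Hopf subalgebra that is finitely generated as an algebra. The base field $k$ is algebraically closed of characteristic zero. *)

(* Defs.v *)
(* Hopf algebras over a field k, encoded without a tensor
   product library: an element of H (x) H (resp. H (x) H (x) H) is represented
   by a finite list of pairs (triples) of pure tensors, and two such lists
   denote the same tensor iff every functional f (x) g (resp. f (x) g (x) h),
   with f g h linear forms on H, takes the same value on them. *)
From HB Require Import structures.
From mathcomp Require Import all_boot all_order all_algebra.
Set Implicit Arguments. Unset Strict Implicit. Unset Printing Implicit Defensive.
Import GRing.Theory.
Local Open Scope ring_scope.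

Section Hopf.
Variables (k : fieldType) (H : algType k).

Definition lin_form (f : H -> k) : Prop :=
  forall (a : k) (x y : H), f (a *: x + y) = a * f x + f y.

Definition tev2 (f g : H -> k) (t : seq (H * H)) : k :=
  \sum_(p <- t) f p.1 * g p.2.
Definition tev3 (f g h : H -> k) (t : seq (H * H * H)) : k :=
  \sum_(p <- t) f p.1.1 * g p.1.2 * h p.2.

Definition teq2 (s t : seq (H * H)) : Prop :=
  forall f g, lin_form f -> lin_form g -> tev2 f g s = tev2 f g t.
Definition teq3 (s t : seq (H * H * H)) : Prop :=
  forall f g h, lin_form f -> lin_form g -> lin_form h ->
    tev3 f g h s = tev3 f g h t.

Record hopf_structure := HopfStructure {
  Delta : H -> seq (H * H);
  eps : H -> k;
  antipode : H -> H;
  Delta_lin : forall (a : k) (x y : H),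
    teq2 (Delta (a *: x + y)) ([seq (a *: p.1, p.2) | p <- Delta x] ++ Delta y);
  Delta_mul : forall x y : H,
    teq2 (Delta (x * y)) [seq (p.1 * q.1, p.2 * q.2) | p <- Delta x, q <- Delta y];
  Delta_one : teq2 (Delta 1) [:: (1, 1)];
  Delta_coassoc : forall h : H,
    teq3 [seq (q.1, q.2, p.2) | p <- Delta h, q <- Delta p.1]
         [seq (p.1, q.1, q.2) | p <- Delta h, q <- Delta p.2];
  eps_lin : lin_form eps;
  eps_mul : forall x y : H, eps (x * y) = eps x * eps y;
  eps_one : eps 1 = 1;
  counit_l : forall h : H, \sum_(p <- Delta h) eps p.1 *: p.2 = h;
  counit_r : forall h : H, \sum_(p <- Delta h) eps p.2 *: p.1 = h;
  antipode_lin : forall (a : k) (x y : H),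
    antipode (a *: x + y) = a *: antipode x + antipode y;
  antipode_l : forall h : H,
    \sum_(p <- Delta h) antipode p.1 * p.2 = eps h *: 1;
  antipode_r : forall h : H,
    \sum_(p <- Delta h) p.1 * antipode p.2 = eps h *: 1
}.

Definition is_subalgebra (K : H -> Prop) : Prop :=
  [/\ K 1,
      forall x y, K x -> K y -> K (x + y),
      forall (a : k) x, K x -> K (a *: x)
    & forall x y, K x -> K y -> K (x * y)].

Definition gen_alg (P : H -> Prop) : H -> Prop :=
  fun h => forall Q, is_subalgebra Q -> (forall y, P y -> Q y) -> Q h.

Definition fin_gen (K : H -> Prop) : Prop :=
  exists g : seq H, forall h, K h <-> gen_alg (fun y => y \in g) h.

Definition hopf_subalgebra (HS : hopf_structure) (K : H -> Prop) : Prop :=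
  [/\ is_subalgebra K,
      forall h, K h -> exists t : seq (H * H),
        (forall p, p \in t -> K p.1 /\ K p.2) /\ teq2 (Delta HS h) t
    & forall h, K h -> K (antipode HS h)].

Definition locally_affine (HS : hopf_structure) (K : H -> Prop) : Prop :=
  forall s : seq H, (forall x, x \in s -> K x) ->
    exists L : H -> Prop,
      [/\ hopf_subalgebra HS L, (forall x, L x -> K x),
          (forall x, x \in s -> L x) & fin_gen L].

End Hopf.

(* Main.v *)
Require Import Defs.
From HB Require Import structures.
From mathcomp Require Import all_boot all_order all_algebra.
From mathcomp Require Import boolp classical_sets.
Set Implicit Arguments. Unset Strict Implicit. Unset Printing Implicit Defensive.
Import GRing.Theory.
Local Open Scope ring_scope.
Local Open Scope classical_set_scope.

Section Sep.
Variables (k : fieldType) (H : algType k).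

Definition good (v : H) (R : set (H * k)) : Prop :=
  [/\ forall p q, R p -> R q -> R (p.1 + q.1, p.2 + q.2),
      forall a p, R p -> R (a *: p.1, a * p.2),
      forall w c1 c2, R (w,c1) -> R (w,c2) -> c1 = c2 &
      (exists p, R p) -> R (v, 1)].

Lemma sep (v : H) : v != 0 -> exists f : H -> k, lin_form f /\ f v != 0.
Proof.
move=> v0.
have [A [[Aadd Ascal Afun Av] Amax]] : exists A, good v A /\ (forall B, A `<` B -> ~ good v B).
  apply: Zorn_bigcup.
  move=> F FP Ftot; split.
  - move=> p q [X FX Xp] [Y FY Yq].
    have [XY|YX] := Ftot X Y FX FY.
      exists Y => //; have [G1 _ _ _] := FP Y FY; exact: G1 (XY _ Xp) Yq.
    exists X => //; have [G1 _ _ _] := FP X FX; exact: G1 Xp (YX _ Yq).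
  - move=> a p [X FX Xp]; exists X => //; have [_ G2 _ _] := FP X FX; exact: G2.
  - move=> w c1 c2 [X FX Xp] [Y FY Yq].
    have [XY|YX] := Ftot X Y FX FY.
      have [_ _ G3 _] := FP Y FY; exact: G3 (XY _ Xp) Yq.
    have [_ _ G3 _] := FP X FX; exact: G3 Xp (YX _ Yq).
  - move=> [p [X FX Xp]]; exists X => //; have [_ _ _ G4] := FP X FX.
    by apply: G4; exists p.
pose R0 : set (H * k) := fun p => exists a : k, p = (a *: v, a).
have R0good : good v R0.
  split.
  - by move=> p q [a ->] [b ->]; exists (a + b); rewrite /= scalerDl.
  - by move=> c p [a ->]; exists (c * a); rewrite /= scalerA.
  - move=> w c1 c2 [a [-> ->]] [b [Eb ->]].
    apply/eqP; rewrite -subr_eq0; apply/negPn/negP => ab.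
    have : (a - b) *: v = 0 by rewrite scalerBl Eb subrr.
    by move/eqP; rewrite scaler_eq0 (negbTE ab) (negbTE v0).
  - by move=> _; exists 1; rewrite scale1r.
have Ane : exists p, A p.
  apply: contrapT => Ae; apply: (Amax R0) => //; split.
    move=> p Ap; exfalso; apply: Ae; by exists p.
  move=> E; apply: Ae; exists (v, 1); apply: E; by exists 1; rewrite scale1r.
have Av1 := Av Ane.
have A0 : A (0, 0) by move: (Ascal 0 _ Av1); rewrite /= scale0r mul0r.
have tot : forall h, exists c, A (h, c).
  move=> h; apply: contrapT => nh.
  pose B : set (H * k) := fun p => exists w c a, A (w, c) /\ p = (w + a *: h, c).
  apply: (Amax B); last first.
    split.
    - move=> p q [w1 [c1 [a1 [A1 ->]]]] [w2 [c2 [a2 [A2 ->]]]].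
      exists (w1 + w2), (c1 + c2), (a1 + a2); split; first exact: (Aadd _ _ A1 A2).
      by rewrite /= scalerDl addrACA.
    - move=> b p [w1 [c1 [a1 [A1 ->]]]].
      exists (b *: w1), (b * c1), (b * a1); split; first exact: (Ascal b _ A1).
      by rewrite /= scalerDr scalerA.
    - move=> w c1 c2 [w1 [d1 [a1 [A1 [E1 ->]]]]] [w2 [d2 [a2 [A2 [E2 ->]]]]].
      have [a12|a12] := eqVneq a1 a2.
        subst a2; have ew : w1 = w2.
          by apply: (addIr (a1 *: h)); rewrite -E1 -E2.
        subst w2; exact: Afun A1 A2.
      exfalso; apply: nh.
      have Hd : A (w2 - w1, d2 - d1).
        by have := Aadd _ _ A2 (Ascal (-1) _ A1); rewrite /= scaleN1r mulN1r.
      exists ((a1 - a2)^-1 * (d2 - d1)).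
      have E : (a1 - a2) *: h = w2 - w1.
        rewrite scalerBl; apply/eqP; rewrite subr_eq addrAC -E2 E1.
        by rewrite addrAC subrr add0r.
      have a12' : a1 - a2 != 0 by rewrite subr_eq0.
      have := Ascal ((a1 - a2)^-1) _ Hd; rewrite /= -E scalerA mulVf // scale1r.
      by [].
    - by move=> _; exists v, 1, 0; split => //; rewrite scale0r addr0.
  split.
    move=> [w c] Awc; exists w, c, 0; split => //; by rewrite scale0r addr0.
  move=> E; apply: nh; exists 0.
  apply: E; by exists 0, 0, 1; split => //; rewrite add0r scale1r.
pose f h := projT1 (cid (tot h)).
have fP h : A (h, f h) by rewrite /f; case: cid.
exists f; split.
  move=> a x y; apply: (Afun (a *: x + y)); first exact: fP.
  exact: (Aadd (a *: x, a * f x) (y, f y) (Ascal a _ (fP x)) (fP y)).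
by rewrite (Afun _ _ _ (fP v) Av1) oner_neq0.
Qed.


Definition lmap (V W : lmodType k) (F : V -> W) :=
  forall a x y, F (a *: x + y) = a *: F x + F y.

Section LmapLemmas.
Variables (V W : lmodType k) (F : V -> W) (hF : lmap F).
Lemma lmap0 : F 0 = 0.
Proof.
have h := hF 1 0 0; rewrite !scale1r addr0 in h.
by apply: (addrI (F 0)); rewrite addr0 -h.
Qed.
Lemma lmapD x y : F (x + y) = F x + F y.
Proof. by have := hF 1 x y; rewrite !scale1r. Qed.
Lemma lmapZ a x : F (a *: x) = a *: F x.
Proof. by have := hF a x 0; rewrite !addr0 lmap0 addr0. Qed.
Lemma lmapN x : F (- x) = - F x.
Proof. by rewrite -scaleN1r lmapZ scaleN1r. Qed.
Lemma lmapB x y : F (x - y) = F x - F y.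
Proof. by rewrite lmapD lmapN. Qed.
Lemma lmap_sum (I : Type) (r : seq I) (G : I -> V) :
  F (\sum_(i <- r) G i) = \sum_(i <- r) F (G i).
Proof.
elim: r => [|i r IH]; first by rewrite !big_nil lmap0.
by rewrite !big_cons lmapD IH.
Qed.
End LmapLemmas.

Lemma lin_lmap (f : H -> k) : lin_form f -> @lmap H k^o f.
Proof. by []. Qed.

Lemma lmap_lin (f : H -> k) : @lmap H k^o f -> lin_form f.
Proof. by []. Qed.

Lemma eq_test (w1 w2 : H) : (forall f, lin_form f -> f w1 = f w2) -> w1 = w2.
Proof.
move=> hw; apply/eqP; rewrite -subr_eq0; apply/negPn/negP => /sep [f [lf fn]].
move: fn; rewrite (@lmapB _ k^o _ (lin_lmap lf)) hw // subrr eqxx.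
by [].
Qed.

Lemma elim_lemma (T : Type) (G : (T -> H) -> Prop) (d : seq (H * T)) :
  (forall f, lin_form f -> forall g, G g -> \sum_(p <- d) f p.1 *: g p.2 = 0) ->
  forall b : H -> T -> H, (forall t, @lmap H H (b^~ t)) -> (forall a, G (b a)) ->
  \sum_(p <- d) b p.1 p.2 = 0.
Proof.
move=> hd b bl bG.
move: {2}(size d) (erefl (size d)) => n; elim: n d hd => [|n IH] d hd.
  by case: d hd => [|p d'] _ //; rewrite big_nil.
case: d hd => [//|[a0 t0] d'] hd /= [sd].
rewrite big_cons /=.
case: (eqVneq a0 0) hd => [->|a00] hd.
  rewrite (lmap0 (bl t0)) add0r; apply: IH sd => f lf g Gg.
  by have := hd f lf g Gg; rewrite big_cons /= (@lmap0 _ k^o _ (lin_lmap lf)) scale0r add0r.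
have [f [lf fa0]] := sep a00.
pose d'' := [seq (p.1 - (f p.1 / f a0) *: a0, p.2) | p <- d'].
have hd'' : forall f', lin_form f' -> forall g, G g -> \sum_(p <- d'') f' p.1 *: g p.2 = 0.
  move=> f' lf' g Gg; rewrite big_map /=.
  under eq_bigr do rewrite (@lmapB _ k^o _ (lin_lmap lf')) (@lmapZ _ k^o _ (lin_lmap lf')) scalerBl.
  rewrite sumrB.
  have h1 := hd f' lf' g Gg; have h2 := hd f lf g Gg.
  rewrite big_cons /= in h1; rewrite big_cons /= in h2.
  have e1 : \sum_(p <- d') f' p.1 *: g p.2 = - (f' a0 *: g t0).
    by apply/eqP; rewrite -addr_eq0 addrC h1.
  have e2 : \sum_(p <- d') f p.1 *: g p.2 = - (f a0 *: g t0).
    by apply/eqP; rewrite -addr_eq0 addrC h2.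
  have -> : \sum_(i <- d') ((f i.1 / f a0) *: (f' a0 : k^o)) *: g i.2
          = (f' a0 / f a0) *: \sum_(p <- d') f p.1 *: g p.2.
    rewrite scaler_sumr; apply: eq_bigr => p _.
    rewrite !scalerA; congr (_ *: _).
    by change ((f p.1 / f a0) * f' a0 = f' a0 / f a0 * f p.1); rewrite mulrC mulrA mulrAC.
  rewrite e1 e2 scalerN scalerA mulrAC -mulrA divff // mulr1 opprK.
  by rewrite addrC subrr.
have := IH d'' hd''; rewrite size_map => /(_ sd).
rewrite big_map /=.
under eq_bigr do rewrite (lmapB (bl _)) (lmapZ (bl _)).
rewrite sumrB => /eqP; rewrite subr_eq0 => /eqP ->.
have h2 := hd f lf (b a0) (bG a0); rewrite big_cons /= in h2.
have e2 : \sum_(p <- d') f p.1 *: b a0 p.2 = - (f a0 *: b a0 t0).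
  by apply/eqP; rewrite -addr_eq0 addrC h2.
under eq_bigr do rewrite mulrC -scalerA.
rewrite -scaler_sumr e2 scalerN scalerA mulVf // scale1r.
by rewrite subrr.
Qed.


Lemma lin_comp (f : H -> k) (g : H -> H) : lin_form f -> lmap g -> lin_form (fun y => f (g y)).
Proof. by move=> lf lg a x y; rewrite lg lf. Qed.

Lemma lmapMr (F : H -> H) c : lmap F -> lmap (fun x => F x * c).
Proof. by move=> hF a x y; rewrite hF mulrDl scalerAl. Qed.
Lemma lmapMl (F : H -> H) c : lmap F -> lmap (fun x => c * F x).
Proof. by move=> hF a x y; rewrite hF mulrDr scalerAr. Qed.
Lemma lmap_sumf (I : Type) (r : seq I) (F : I -> H -> H) :
  (forall i, lmap (F i)) -> lmap (fun x => \sum_(i <- r) F i x).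
Proof.
move=> hF a x y; elim: r => [|i r IH]; first by rewrite !big_nil scaler0 addr0.
by rewrite !big_cons IH hF scalerDr addrACA.
Qed.
Lemma lmap_id : lmap (fun x : H => x). Proof. by []. Qed.

Definition bil (b : H -> H -> H) := (forall y, lmap (b^~ y)) /\ (forall x, lmap (b x)).

Lemma teq2_bil (s t : seq (H * H)) : teq2 s t -> forall b, bil b ->
  \sum_(p <- s) b p.1 p.2 = \sum_(p <- t) b p.1 p.2.
Proof.
move=> st b [bl br].
pose d := s ++ [seq (- p.1, p.2) | p <- t].
apply/eqP; rewrite -subr_eq0; apply/eqP.
have -> : \sum_(p <- s) b p.1 p.2 - \sum_(p <- t) b p.1 p.2 = \sum_(p <- d) b p.1 p.2.
  rewrite big_cat big_map /=.
  under [X in _ = _ + X]eq_bigr do rewrite (lmapN (bl _)).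
  by rewrite sumrN.
apply: (@elim_lemma H (fun g => lmap g) d _ b bl br).
move=> f lf g lg; rewrite big_cat big_map /=.
under [X in _ + X = _]eq_bigr do rewrite (@lmapN _ k^o _ (lin_lmap lf)) scaleNr.
rewrite sumrN; apply/eqP; rewrite subr_eq0; apply/eqP.
apply: eq_test => phi lphi.
rewrite !(@lmap_sum _ k^o _ (lin_lmap lphi)).
under eq_bigr do rewrite (@lmapZ _ k^o _ (lin_lmap lphi)).
under [RHS]eq_bigr do rewrite (@lmapZ _ k^o _ (lin_lmap lphi)).
exact: (st f _ lf (lin_comp lphi lg)).
Qed.

Definition tri (b : H -> H -> H -> H) :=
  [/\ forall y z, lmap (fun x => b x y z), forall x z, lmap (fun y => b x y z)
    & forall x y, lmap (b x y)].

Lemma teq3_tri (s t : seq (H * H * H)) : teq3 s t -> forall b, tri b ->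
  \sum_(p <- s) b p.1.1 p.1.2 p.2 = \sum_(p <- t) b p.1.1 p.1.2 p.2.
Proof.
move=> st b [b1 b2 b3].
pose d := [seq (p.1.1, (p.1.2, p.2)) | p <- s] ++ [seq (- p.1.1, (p.1.2, p.2)) | p <- t].
apply/eqP; rewrite -subr_eq0; apply/eqP.
have -> : \sum_(p <- s) b p.1.1 p.1.2 p.2 - \sum_(p <- t) b p.1.1 p.1.2 p.2 = \sum_(p <- d) b p.1 p.2.1 p.2.2.
  rewrite big_cat !big_map /=.
  under [X in _ = _ + X]eq_bigr do rewrite (lmapN (b1 _ _)).
  by rewrite sumrN.
apply: (@elim_lemma (H * H) (fun g => bil (fun y z => g (y, z))) d _
  (fun x q => b x q.1 q.2) (fun q => b1 q.1 q.2) (fun x => conj (fun z => b2 x z) (fun y => b3 x y))).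
move=> f lf g [g1 g2]; rewrite big_cat !big_map /=.
under [X in _ + X = _]eq_bigr do rewrite (@lmapN _ k^o _ (lin_lmap lf)) scaleNr.
rewrite sumrN; apply/eqP; rewrite subr_eq0; apply/eqP.
pose s2 := [seq (p.1.2, f p.1.1 *: p.2) | p <- s].
pose t2 := [seq (p.1.2, f p.1.1 *: p.2) | p <- t].
have e2 : teq2 s2 t2.
  move=> phi psi lphi lpsi; rewrite /tev2 !big_map /=.
  under eq_bigr do rewrite (@lmapZ _ k^o _ (lin_lmap lpsi)).
  under [RHS]eq_bigr do rewrite (@lmapZ _ k^o _ (lin_lmap lpsi)).
  have := st f phi psi lf lphi lpsi; rewrite /tev3.
  have E (r : seq (H * H * H)) : \sum_(i <- r) phi i.1.2 * (f i.1.1 *: (psi i.2 : k^o))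
      = \sum_(p <- r) f p.1.1 * phi p.1.2 * psi p.2.
    by apply: eq_bigr => i _; rewrite /GRing.scale /= mulrCA mulrA.
  by rewrite !E.
have := teq2_bil e2 (conj g1 g2); rewrite !big_map /=.
under eq_bigr do rewrite (lmapZ (g2 _)).
under [X in _ = X -> _]eq_bigr do rewrite (lmapZ (g2 _)).
by [].
Qed.


Lemma lmap_comp (F G : H -> H) : lmap F -> lmap G -> lmap (fun x => F (G x)).
Proof. by move=> hF hG a x y; rewrite hG hF. Qed.

Section HopfS.
Variable HS : hopf_structure H.
Local Notation D := (Delta HS).
Local Notation S := (antipode HS).
Local Notation e := (eps HS).

Lemma S_lmap : lmap S. Proof. exact: antipode_lin. Qed.
Lemma e_lmap : @lmap H k^o e. Proof. exact: eps_lin. Qed.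

Definition cv (F G : H -> H -> H) a b :=
  \sum_(p <- D a) \sum_(q <- D b) F p.1 q.1 * G p.2 q.2.

Definition Eu (u v : H) : H := (e u * e v) *: 1.

Lemma cv_counit_r X a b : bil X -> cv X Eu a b = X a b.
Proof.
move=> [X1 X2]; rewrite /cv /Eu.
under eq_bigr do under eq_bigr do rewrite -scalerAr mulr1 -scalerA.
under eq_bigr => p _.
  rewrite -scaler_sumr.
  under eq_bigr do rewrite -(lmapZ (X2 _)).
  rewrite -(lmap_sum (X2 _)) counit_r.
  over.
under eq_bigr do rewrite -(lmapZ (X1 _)).
by rewrite -(lmap_sum (X1 _)) counit_r.
Qed.

Lemma cv_counit_l X a b : bil X -> cv Eu X a b = X a b.
Proof.
move=> [X1 X2]; rewrite /cv /Eu.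
under eq_bigr do under eq_bigr do rewrite -scalerAl mul1r -scalerA.
under eq_bigr => p _.
  rewrite -scaler_sumr.
  under eq_bigr do rewrite -(lmapZ (X2 _)).
  rewrite -(lmap_sum (X2 _)) counit_l.
  over.
under eq_bigr do rewrite -(lmapZ (X1 _)).
by rewrite -(lmap_sum (X1 _)) counit_l.
Qed.


Lemma sum3 (r : seq (H * H * H)) (P : H * H * H -> H) :
  \sum_(u <- r) P (u.1.1, u.1.2, u.2) = \sum_(u <- r) P u.
Proof. by apply: eq_bigr => [[[? ?] ?]] _. Qed.

Lemma cv_assoc F G K a b : bil F -> bil G -> bil K ->
  cv (cv F G) K a b = cv F (cv G K) a b.
Proof.
move=> [F1 F2] [G1 G2] [K1 K2].
pose CA1 c := [seq (q.1, q.2, p.2) | p <- D c, q <- D p.1].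
pose CA2 c := [seq (p.1, q.1, q.2) | p <- D c, q <- D p.2].
pose T (u v : H * H * H) := F u.1.1 v.1.1 * G u.1.2 v.1.2 * K u.2 v.2.
have L1 : cv (cv F G) K a b = \sum_(u <- CA1 a) \sum_(v <- CA1 b) T u v.
  rewrite /cv big_allpairs_dep /=; apply: eq_bigr => p _.
  under [RHS]eq_bigr do rewrite big_allpairs_dep /=.
  under eq_bigr do rewrite mulr_suml.
  rewrite exchange_big /=; apply: eq_bigr => p' _; apply: eq_bigr => q _.
  by rewrite mulr_suml.
have L2 : cv F (cv G K) a b = \sum_(u <- CA2 a) \sum_(v <- CA2 b) T u v.
  rewrite /cv big_allpairs_dep /=; apply: eq_bigr => p _.
  under [RHS]eq_bigr do rewrite big_allpairs_dep /=.
  under eq_bigr do rewrite mulr_sumr.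
  rewrite exchange_big /=; apply: eq_bigr => p' _; apply: eq_bigr => q _.
  rewrite mulr_sumr; apply: eq_bigr => q' _.
  by rewrite /T /= mulrA.
have M1 : \sum_(u <- CA1 a) \sum_(v <- CA1 b) T u v =
          \sum_(u <- CA2 a) \sum_(v <- CA1 b) T u v.
  have := @teq3_tri _ _ (Delta_coassoc HS a) (fun x y z => \sum_(v <- CA1 b) T (x, y, z) v) _.
  rewrite (sum3 _ (fun u => \sum_(v <- CA1 b) T u v)).
  rewrite (sum3 _ (fun u => \sum_(v <- CA1 b) T u v)).
  apply; split.
  - move=> y z; apply: (@lmap_sumf _ _ (fun v x => T (x, y, z) v)) => v.
    rewrite /T /=; exact: lmapMr _ (lmapMr _ (F1 _)).
  - move=> x z; apply: (@lmap_sumf _ _ (fun v y => T (x, y, z) v)) => v.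
    rewrite /T /=; exact: lmapMr _ (lmapMl _ (G1 _)).
  - move=> x y; apply: (@lmap_sumf _ _ (fun v z => T (x, y, z) v)) => v.
    rewrite /T /=; exact: lmapMl _ (K1 _).
have M2 : \sum_(u <- CA2 a) \sum_(v <- CA1 b) T u v =
          \sum_(u <- CA2 a) \sum_(v <- CA2 b) T u v.
  apply: eq_bigr => u _.
  have := @teq3_tri _ _ (Delta_coassoc HS b) (fun x y z => T u (x, y, z)) _.
  rewrite (sum3 _ (fun v => T u v)) (sum3 _ (fun v => T u v)).
  apply; split.
  - move=> y z; rewrite /T /=; exact: lmapMr _ (lmapMr _ (F2 _)).
  - move=> x z; rewrite /T /=; exact: lmapMr _ (lmapMl _ (G2 _)).
  - move=> x y; rewrite /T /=; exact: lmapMl _ (K2 _).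
by rewrite L1 M1 M2 L2.
Qed.


Lemma bil_mul : bil (fun u v : H => u * v).
Proof. split => w; [exact: lmapMr _ lmap_id | exact: lmapMl _ lmap_id]. Qed.

Lemma bil_Smul : bil (fun u v : H => S u * v).
Proof. split => w; [exact: lmapMr _ S_lmap | exact: lmapMl _ lmap_id]. Qed.

Lemma S_one : S 1 = 1.
Proof.
have := antipode_l HS 1; rewrite eps_one scale1r.
rewrite (teq2_bil (Delta_one HS) bil_Smul) big_cons big_nil addr0 mulr1.
by [].
Qed.

Lemma S_mul a b : S (a * b) = S b * S a.
Proof.
pose R u v := S (u * v); pose L u v := S v * S u; pose M u v : H := u * v.
have bR : bil R.
  split => w; [exact: lmap_comp S_lmap (lmapMr _ lmap_id)
              | exact: lmap_comp S_lmap (lmapMl _ lmap_id)].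
have bL : bil L.
  split => w; [exact: lmapMl _ S_lmap | exact: lmapMr _ S_lmap].
have bE : bil Eu.
  rewrite /Eu; split => w c x y.
    rewrite (@lmapD _ k^o _ e_lmap) (@lmapZ _ k^o _ e_lmap) scalerA -scalerDl.
    congr (_ *: _); change ((c * e x + e y) * e w = c * (e x * e w) + e y * e w).
    by rewrite mulrDl mulrA.
  rewrite (@lmapD _ k^o _ e_lmap) (@lmapZ _ k^o _ e_lmap) scalerA -scalerDl.
  congr (_ *: _); change (e w * (c * e x + e y) = c * (e w * e x) + e w * e y).
  by rewrite mulrDr mulrCA.
have A u v : cv R M u v = Eu u v.
  have := teq2_bil (Delta_mul HS u v) bil_Smul.
  rewrite antipode_l big_allpairs_dep /= => h.
  by rewrite /cv /R /M -h /Eu eps_mul.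
have B u v : cv M L u v = Eu u v.
  rewrite /cv /M /L.
  under eq_bigr => p _ do under eq_bigr => q _ do rewrite mulrA -(mulrA p.1 q.1).
  under eq_bigr do rewrite -mulr_suml -mulr_sumr antipode_r -scalerAr -scalerAl mulr1.
  rewrite -scaler_sumr antipode_r /Eu scalerA mulrC.
  by [].
have -> : S (a * b) = R a b by [].
rewrite -(cv_counit_r a b bR).
have -> : cv R Eu a b = cv R (cv M L) a b.
  by apply: eq_bigr => p _; apply: eq_bigr => q _; rewrite B.
rewrite -cv_assoc //; last exact: bil_mul.
have -> : cv (cv R M) L a b = cv Eu L a b.
  by apply: eq_bigr => p _; apply: eq_bigr => q _; rewrite A.
by rewrite cv_counit_l.
Qed.


Lemma tev2_lin f g c a b : lin_form f -> lin_form g ->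
  tev2 f g (D (c *: a + b)) = c * tev2 f g (D a) + tev2 f g (D b).
Proof.
move=> lf lg; rewrite (Delta_lin HS c a b lf lg) /tev2 big_cat big_map /=.
congr (_ + _); rewrite mulr_sumr; apply: eq_bigr => p _.
by rewrite (@lmapZ _ k^o _ (lin_lmap lf)) mulrA.
Qed.

Lemma tev2_0 f g : lin_form f -> lin_form g -> tev2 f g (D 0) = 0.
Proof.
move=> lf lg; have := tev2_lin 1 0 0 lf lg; rewrite scale1r addr0 mul1r => h.
by apply: (addrI (tev2 f g (D 0))); rewrite addr0 -h.
Qed.

Lemma mulseq_teq (s1 t1 s2 t2 : seq (H * H)) f g : teq2 s1 t1 -> teq2 s2 t2 ->
  lin_form f -> lin_form g ->
  tev2 f g [seq (p.1 * q.1, p.2 * q.2) | p <- s1, q <- s2] =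
  tev2 f g [seq (p.1 * q.1, p.2 * q.2) | p <- t1, q <- t2].
Proof.
move=> e1 e2 lf lg; rewrite /tev2 !big_allpairs_dep /=.
have -> : \sum_(i <- s1) \sum_(i0 <- s2) f (i.1 * i0.1) * g (i.2 * i0.2) =
          \sum_(i <- s1) \sum_(i0 <- t2) f (i.1 * i0.1) * g (i.2 * i0.2).
  apply: eq_bigr => p _.
  exact: (e2 _ _ (lin_comp lf (lmapMl _ lmap_id)) (lin_comp lg (lmapMl _ lmap_id))).
rewrite exchange_big [RHS]exchange_big /=.
apply: eq_bigr => q _.
exact: (e1 _ _ (lin_comp lf (lmapMr _ lmap_id)) (lin_comp lg (lmapMr _ lmap_id))).
Qed.

End HopfS.

Lemma sub0 (Q : H -> Prop) : is_subalgebra Q -> Q 0.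
Proof. by case=> Q1 _ QZ _; rewrite -(scale0r 1); apply: QZ. Qed.

Lemma gen_sub (P : H -> Prop) : is_subalgebra (gen_alg P).
Proof.
split.
- by move=> Q [] .
- by move=> a b ha hb Q hQ PQ; case: (hQ) => _ QD _ _; apply: QD; [apply: ha|apply: hb].
- by move=> c a ha Q hQ PQ; case: (hQ) => _ _ QZ _; apply: QZ; apply: ha.
- by move=> a b ha hb Q hQ PQ; case: (hQ) => _ _ _ QM; apply: QM; [apply: ha|apply: hb].
Qed.

Lemma gen_incl (P : H -> Prop) y : P y -> gen_alg P y.
Proof. by move=> Py Q _ PQ; apply: PQ. Qed.

Lemma gen_mono (P Q : H -> Prop) : (forall y, P y -> gen_alg Q y) ->
  forall h, gen_alg P h -> gen_alg Q h.
Proof. by move=> PQ h hP; apply: hP; [apply: gen_sub|]. Qed.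

Lemma fin_support (K : H -> Prop) x :
  (forall h : H, gen_alg (fun y => K y \/ y = x) h) ->
  forall u : seq H, exists g : seq H, (forall y, y \in g -> K y) /\
    forall h, h \in u -> gen_alg (fun y => y \in g \/ y = x) h.
Proof.
move=> genH.
have one h : exists g : seq H, (forall y, y \in g -> K y) /\
    gen_alg (fun y => y \in g \/ y = x) h.
  apply: (genH h (fun h => exists g : seq H, (forall y, y \in g -> K y) /\
    gen_alg (fun y => y \in g \/ y = x) h)).
  - have [G1 GD GZ GM] := gen_sub (fun y => y \in [::] \/ y = x).
    split.
    + by exists [::]; split.
    + move=> a b [g1 [g1K ha]] [g2 [g2K hb]]; exists (g1 ++ g2); split.
        by move=> y; rewrite mem_cat => /orP[]; [apply: g1K|apply: g2K].
      have [_ D' _ _] := gen_sub (fun y => y \in g1 ++ g2 \/ y = x).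
      apply: D'; [apply: gen_mono ha | apply: gen_mono hb] => y [yg|->];
        apply: gen_incl; by [left; rewrite mem_cat yg ?orbT|right].
    + move=> c a [g1 [g1K ha]]; exists g1; split => //.
      by have [_ _ Z' _] := gen_sub (fun y => y \in g1 \/ y = x); apply: Z'.
    + move=> a b [g1 [g1K ha]] [g2 [g2K hb]]; exists (g1 ++ g2); split.
        by move=> y; rewrite mem_cat => /orP[]; [apply: g1K|apply: g2K].
      have [_ _ _ M'] := gen_sub (fun y => y \in g1 ++ g2 \/ y = x).
      apply: M'; [apply: gen_mono ha | apply: gen_mono hb] => y [yg|->];
        apply: gen_incl; by [left; rewrite mem_cat yg ?orbT|right].
  - move=> y [Ky|->].
      exists [:: y]; split; first by move=> z; rewrite inE => /eqP ->.
      by apply: gen_incl; left; rewrite inE.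
    by exists [::]; split => //; apply: gen_incl; right.
elim=> [|h u [g [gK gu]]]; first by exists [::]; split.
have [g1 [g1K hg1]] := one h.
exists (g1 ++ g); split.
  by move=> y; rewrite mem_cat => /orP[]; [apply: g1K|apply: gK].
move=> z; rewrite inE => /orP[/eqP ->|zu].
  by apply: gen_mono hg1 => y [yg|->]; apply: gen_incl;
    [left; rewrite mem_cat yg | right].
by apply: gen_mono (gu z zu) => y [yg|->]; apply: gen_incl;
  [left; rewrite mem_cat yg orbT | right].
Qed.


Lemma main_lemma (HS : hopf_structure H) (K : H -> Prop) (x : H) :
  hopf_subalgebra HS K -> locally_affine HS K ->
  (forall h : H, gen_alg (fun y => K y \/ y = x) h) ->
  locally_affine HS (fun _ => True).
Proof.
move=> hK laK genH s _.
pose u := s ++ antipode HS x :: flatten [seq [:: p.1; p.2] | p <- Delta HS x].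
have [g [gK gu]] := fin_support genH u.
have [L' [hL' L'K gL' [g' fg']]] := laK g gK.
pose L := gen_alg (fun y => L' y \/ y = x).
have [L1 LD LZ LM] := gen_sub (fun y => L' y \/ y = x).
have uL : forall h, h \in u -> L h.
  move=> h hu; apply: gen_mono (gu h hu) => y [yg|->]; apply: gen_incl;
    [left; exact: gL' | by right].
have [[L'1 L'D L'Z L'M] L'Delta L'S] := hL'.
exists L; split => //.
- split => //.
  + move=> h hL.
    apply: (hL (fun h => exists t : seq (H * H),
        (forall p, p \in t -> L p.1 /\ L p.2) /\ teq2 (Delta HS h) t)).
    * split.
      -- exists [:: (1, 1)]; split; last exact: Delta_one.
         by move=> p; rewrite inE => /eqP ->.
      -- move=> a b [t1 [t1L e1]] [t2 [t2L e2]]; exists (t1 ++ t2); split.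
           by move=> p; rewrite mem_cat => /orP[]; [apply: t1L|apply: t2L].
         move=> f g0 lf lg; have := tev2_lin HS 1 a b lf lg.
         rewrite scale1r mul1r => ->.
         by rewrite e1 // e2 // /tev2 big_cat.
      -- move=> c a [t1 [t1L e1]]; exists [seq (c *: p.1, p.2) | p <- t1]; split.
           move=> p /mapP [q qt ->] /=; have [h1 h2] := t1L q qt.
           by split => //; apply: LZ.
         move=> f g0 lf lg; rewrite -[c *: a]addr0 tev2_lin // tev2_0 // addr0.
         rewrite e1 // /tev2 big_map mulr_sumr; apply: eq_bigr => p _ /=.
         by rewrite (@lmapZ _ k^o _ (lin_lmap lf)) mulrA.
      -- move=> a b [t1 [t1L e1]] [t2 [t2L e2]].
         exists [seq (p.1 * q.1, p.2 * q.2) | p <- t1, q <- t2]; split.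
           move=> p /allpairsPdep [p1 [q1 [p1t q1t ->]]] /=.
           have [h1 h2] := t1L _ p1t; have [h3 h4] := t2L _ q1t.
           by split; apply: LM.
         move=> f g0 lf lg; rewrite (Delta_mul HS a b lf lg).
         exact: mulseq_teq.
    * move=> y [Ly|->].
        have [t [tL et]] := L'Delta y Ly; exists t; split => //.
        move=> p pt; have [h1 h2] := tL p pt.
        by split; apply: gen_incl; left.
      exists (Delta HS x); split => //.
      move=> p pD; split; apply: uL; rewrite mem_cat; apply/orP; right;
        rewrite inE; apply/orP; right; apply/flatten_mapP; exists p => //;
        by rewrite !inE eqxx ?orbT.
  + move=> h hL.
    apply: (hL (fun h => L (antipode HS h))).
    * split.
      -- by rewrite S_one.
      -- by move=> a b ha hb; rewrite (lmapD (S_lmap HS)); apply: LD.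
      -- by move=> c a ha; rewrite (lmapZ (S_lmap HS)); apply: LZ.
      -- by move=> a b ha hb; rewrite S_mul; apply: LM.
    * move=> y [Ly|->].
        by apply: gen_incl; left; apply: L'S.
      by apply: uL; rewrite mem_cat inE eqxx orbT.
- by move=> y ys; apply: uL; rewrite mem_cat ys.
- exists (x :: g') => h; split.
    apply: gen_mono => y [Ly|->].
      have := (fg' y).1 Ly; apply: gen_mono => z zg; apply: gen_incl.
      by rewrite inE zg orbT.
    by apply: gen_incl; rewrite inE eqxx.
  apply: gen_mono => y; rewrite inE => /orP[/eqP ->|yg].
    by apply: gen_incl; right.
  apply: gen_incl; left; apply/(fg' y); exact: gen_incl.
Qed.

End Sep.

Theorem proposition3p9 (k : closedFieldType) (k_char0 : [pchar k] =i pred0)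
  (H : algType k) (HS : hopf_structure H) (K : H -> Prop) (x : H) :
  hopf_subalgebra HS K -> locally_affine HS K ->
  (forall h : H, gen_alg (fun y => K y \/ y = x) h) ->
  locally_affine HS (fun _ => True).
Proof. exact: main_lemma. Qed.
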